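(* Let $G$ be an abelian Hausdorff topological group and $\kappa$ a cardinal. The following are equivalent: (i) $G$ contains a subgroup topologically isomorphic to a direct sum of $\kappa$-many non-trivial topological groups; (ii) $G$ contains a topologically independent absolutely Cauchy summable set of size $\kappa$.
   Context: All groups are abelian; topological groups are Hausdorff. The direct sum $\bigoplus_{i\in I}H_i$ of topological groups is the subgroup of the product $\prod_{i\in I}H_i$ consisting of elements with finitely many non-zero coordinates, equipped with the subspace topology of the Tychonoff product topology. A subset $A\subseteq G$ is absolutely Cauchy summable if for every neighbourhood $U$ of $0$ there is a finite $F\subseteq A$ such that the subgroup $\langle A\setminus F\rangle$ generated by $A\setminus F$ is contained in $U$. A subset $A\subseteq G$ is topologically independent if $0\notin A$ and for every neighbourhood $W$ of $0$ there is a neighbourhood $U$ of $0$ such that for every finite $F\subseteq A$ and all integers $\{z_a:a\in F\}$, $\sum_{a\in F}z_aa\in U$ implies $z_aa\in W$ for all $a\in F$. *)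

(* Defs.v *)
From HB Require Import structures.
From mathcomp Require Import all_boot all_order all_algebra.
From mathcomp Require Import all_classical all_reals all_analysis.
Set Implicit Arguments. Unset Strict Implicit. Unset Printing Implicit Defensive.
Import Order.TTheory GRing.Theory Num.Theory.
Local Open Scope classical_set_scope.
Local Open Scope ring_scope.

Definition is_subgroup (G : zmodType) (S : set G) : Prop :=
  S 0 /\ (forall x y, S x -> S y -> S (x - y)).

Definition gen_subgroup (G : zmodType) (S : set G) : set G :=
  [set x | forall K : set G, is_subgroup K -> S `<=` K -> K x].

Definition abs_cauchy_summable (G : topologicalZmodType) (A : set G) : Prop :=
  forall U : set G, nbhs (0 : G) U ->
    exists F : set G, [/\ finite_set F, F `<=` A & gen_subgroup (A `\` F) `<=` U].

(* A is topologically independent in G.  A finite subset F of A is given as a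
   duplicate-free list of elements of A. *)
Definition top_independent (G : topologicalZmodType) (A : set G) : Prop :=
  ~ A 0 /\
  forall W : set G, nbhs (0 : G) W ->
    exists U : set G, nbhs (0 : G) U /\
      forall (F : seq G) (z : G -> int), uniq F -> (forall a, a \in F -> A a) ->
        U (\sum_(a <- F) a *~ z a) -> forall a, a \in F -> W (a *~ z a).

(* The (underlying set of the) direct sum of the family H inside the product
   prod_topology H (Tychonoff topology): elements with finite support. *)
Definition direct_sum_set (I : Type) (H : I -> topologicalZmodType) :
    set (prod_topology (fun i => H i : topologicalType)) :=
  [set x | finite_set [set i | x i != 0]].

(* f restricted to the direct sum D is a topological isomorphism of D (with the
   subspace topology of the product) onto its image f(D) (with the subspace
   topology of G); f(D) is then a subgroup of G topologically isomorphic to the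
   direct sum. *)
Definition top_iso_direct_sum_into (I : Type) (H : I -> topologicalZmodType)
    (G : topologicalZmodType) (f : prod_topology (fun i => H i : topologicalType) -> G) : Prop :=
  let D := @direct_sum_set I H in
  [/\ (forall x y, D x -> D y -> f (fun i => x i + y i) = f x + f y),
      {in D &, injective f},
      {within D, continuous f} &
      (forall x, D x -> forall U, nbhs x U ->
         exists V : set G, nbhs (f x) V /\ (forall y, D y -> V (f y) -> U y))].

Definition contains_direct_sum (I : Type) (H : I -> topologicalZmodType)
    (G : topologicalZmodType) : Prop :=
  exists f : prod_topology (fun i => H i : topologicalType) -> G,
    top_iso_direct_sum_into f.

(* Main.v *)
Require Import Defs.
From HB Require Import structures.
From mathcomp Require Import all_boot all_order all_algebra.
From mathcomp Require Import all_classical all_reals all_analysis.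
From mathcomp Require Import finmap.
Set Implicit Arguments. Unset Strict Implicit. Unset Printing Implicit Defensive.
Import Order.TTheory GRing.Theory Num.Theory.
Local Open Scope classical_set_scope.
Local Open Scope ring_scope.
Section grp.
Context (G : zmodType).
Implicit Types (S K : set G).
Lemma subg0 K : is_subgroup K -> K 0. Proof. by case. Qed.
Lemma subgB K x y : is_subgroup K -> K x -> K y -> K (x - y). Proof. by case=> _; apply. Qed.
Lemma subgN K x : is_subgroup K -> K x -> K (- x).
Proof. by move=> hK Kx; rewrite -sub0r; apply: subgB => //; exact: subg0. Qed.
Lemma subgD K x y : is_subgroup K -> K x -> K y -> K (x + y).
Proof. by move=> hK Kx Ky; rewrite -[y]opprK; apply: subgB => //; exact: subgN. Qed.
Lemma subg_sum K (J : eqType) (r : seq J) (F : J -> G) : is_subgroup K ->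
  (forall i, i \in r -> K (F i)) -> K (\sum_(i <- r) F i).
Proof.
move=> hK; elim: r => [|i r IH] Hr; first by rewrite big_nil; exact: subg0.
rewrite big_cons; apply: subgD => //; first by apply: Hr; rewrite inE eqxx.
by apply: IH => j jr; apply: Hr; rewrite inE jr orbT.
Qed.
Lemma gen_is_sub S : is_subgroup (gen_subgroup S).
Proof.
split; first by move=> K hK _; exact: subg0.
by move=> x y Hx Hy K hK SK; apply: subgB => //; [exact: Hx| exact: Hy].
Qed.
Lemma gen_incl S : S `<=` gen_subgroup S.
Proof. by move=> x Sx K _ SK; exact: SK. Qed.
Lemma gen_min S K : is_subgroup K -> S `<=` K -> gen_subgroup S `<=` K.
Proof. by move=> hK SK x; apply. Qed.
Lemma gen_mono S K : S `<=` K -> gen_subgroup S `<=` gen_subgroup K.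
Proof. by move=> SK x Hx K' hK' KK'; apply: Hx => //; apply: subset_trans KK'. Qed.
Lemma gen1 (a x : G) : gen_subgroup [set a] x -> exists n : int, x = a *~ n.
Proof.
move=> Hx; suff : [set y | exists n : int, y = a *~ n] x by [].
apply: (gen_min _ _ Hx).
  split; first by exists 0; rewrite mulr0z.
  by move=> u v [n ->] [m ->]; exists (n - m); rewrite mulrzBr.
by move=> _ ->; exists 1; rewrite mulr1z.
Qed.
Lemma gen1_mul (a : G) (n : int) : gen_subgroup [set a] (a *~ n).
Proof.
have hS := gen_is_sub [set a].
have Sa : gen_subgroup [set a] a by apply: gen_incl.
have Hn : forall k : nat, gen_subgroup [set a] (a *+ k).
  elim=> [|k IH]; first by rewrite mulr0n; exact: (subg0 hS).
  by rewrite mulrS; apply: (subgD hS Sa IH).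
case: n => n; first exact: Hn.
exact: (subgN hS (Hn n.+1)).
Qed.
End grp.

Section top.
Context (M : topologicalZmodType).
Lemma addl_cont (p : M) : continuous (fun g => p + g).
Proof.
move=> q; apply: (@continuous_comp _ _ _ (fun g : M => (p, g)) (fun x : M * M => x.1 + x.2)).
  by apply: cvg_pair; [exact: cvg_cst| exact: cvg_id].
exact: add_continuous.
Qed.
Lemma nbhs_shift (p q : M) W : nbhs (p + q) W -> nbhs q [set g | W (p + g)].
Proof. by move=> HW; exact: (@addl_cont p q W HW). Qed.
Lemma nbhs_shift0 (p : M) W : nbhs p W -> nbhs 0 [set g | W (p + g)].
Proof. by move=> HW; apply: nbhs_shift; rewrite addr0. Qed.
Lemma nbhs_unshift0 (p : M) W : nbhs 0 W -> nbhs p [set g | W (g - p)].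
Proof.
move=> HW; have := @nbhs_shift (- p) p W; rewrite addNr => /(_ HW).
by apply: filterS => g /=; rewrite addrC.
Qed.
Lemma add_nbhs0 W : nbhs (0 : M) W ->
  exists V1 V2, [/\ nbhs (0 : M) V1, nbhs (0 : M) V2 & forall u v, V1 u -> V2 v -> W (u + v)].
Proof.
move=> HW; have := @add_continuous M (0, 0) W; rewrite /= addr0 => /(_ HW).
move=> [[A1 A2] /= [nA1 nA2] sub]; exists A1, A2; split => // u v Au Av.
exact: (sub (u, v)).
Qed.
Lemma ksum (m : nat) W : nbhs (0 : M) W -> exists W1, nbhs (0 : M) W1 /\
  forall s : seq M, (size s <= m)%N -> (forall g, g \in s -> W1 g) -> W (\sum_(g <- s) g).
Proof.
elim: m W => [|m IH] W HW.
  exists W; split => // -[|//] _ _; rewrite big_nil; exact: nbhs_singleton.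
have [V1 [V2 [n1 n2 HV]]] := add_nbhs0 HW.
have [W2 [nW2 HW2]] := IH V2 n2.
exists (V1 `&` W2); split; first exact: filterI.
case=> [|g s] Hs Hg; first by rewrite big_nil; exact: nbhs_singleton.
rewrite big_cons; apply: HV; first by case: (Hg g); rewrite ?inE ?eqxx.
apply: HW2 => // h hs; by case: (Hg h) => //; rewrite inE hs orbT.
Qed.
Lemma haus0 (g : M) : hausdorff_space M -> (forall W, nbhs (0 : M) W -> W g) -> g = 0.
Proof.
move=> hM Hg; apply: hM => A B nA nB; exists g; split.
  exact: nbhs_singleton.
exact: Hg.
Qed.
End top.
Lemma wcontP (T U : topologicalType) (D : set T) (f : T -> U) :
  {within D, continuous f} <-> forall x, D x -> forall W, nbhs (f x) W -> nbhs x [set y | D y -> W (f y)].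
Proof.
rewrite continuous_subspace_in; split.
  move=> Hc x Dx W HW; have := Hc x (mem_set Dx) W HW => H.
  have : within D (nbhs x) (f @^-1` W) by rewrite (nbhs_subspace_in Dx); exact: H.
  by [].
move=> Hc x /set_mem Dx W HW; have := Hc x Dx W HW => H.
have : within D (nbhs x) (f @^-1` W) by exact: H.
by rewrite (nbhs_subspace_in Dx).
Qed.
Definition sgT (G : topologicalZmodType) (S : set G) (hS : is_subgroup S) := set_type S.
Section sg.
Context (G : topologicalZmodType) (S : set G) (hS : is_subgroup S).
Local Notation T := (sgT hS).
HB.instance Definition _ := Choice.on T.
HB.instance Definition _ := Topological.copy T (set_type S).
Lemma sg0 : S 0. Proof. by case: hS. Qed.
Lemma sgB x y : S x -> S y -> S (x - y). Proof. by case: hS => _; apply. Qed.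
Lemma sgN x : S x -> S (- x). Proof. by move=> Sx; rewrite -sub0r; apply: sgB => //; exact: sg0. Qed.
Lemma sgD x y : S x -> S y -> S (x + y). Proof. by move=> Sx Sy; rewrite -[y]opprK; apply: sgB => //; exact: sgN. Qed.
Definition sg_zero : T := exist _ 0 (mem_set sg0).
Definition sg_add (x y : T) : T := exist _ (val x + val y) (mem_set (sgD (set_valP x) (set_valP y))).
Definition sg_opp (x : T) : T := exist _ (- val x) (mem_set (sgN (set_valP x))).
Lemma sg_addA : associative sg_add.
Proof. by move=> x y z; apply: val_inj; rewrite /= addrA. Qed.
Lemma sg_addC : commutative sg_add.
Proof. by move=> x y; apply: val_inj; rewrite /= addrC. Qed.
Lemma sg_add0 : left_id sg_zero sg_add.
Proof. by move=> x; apply: val_inj; rewrite /= add0r. Qed.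
Lemma sg_addN : left_inverse sg_zero sg_opp sg_add.
Proof. by move=> x; apply: val_inj; rewrite /= addNr. Qed.
HB.instance Definition _ := GRing.isZmodule.Build T sg_addA sg_addC sg_add0 sg_addN.
Lemma sg_valB (x y : T) : val (x - y) = val x - val y. Proof. by []. Qed.
Lemma sg_val0 : val (0 : T) = 0. Proof. by []. Qed.
Lemma sg_sub_cont : continuous (fun x : T * T => x.1 - x.2).
Proof.
apply: (@continuous_comp_initial _ (T * T)%type G (set_val : set_type S -> G)).
have -> : (set_val \o (fun x : T * T => x.1 - x.2)) = (fun x : G * G => x.1 - x.2) \o (fun x : T * T => (val x.1, val x.2)).
  by apply: funext.
move=> x; apply: continuous_comp; last exact: sub_continuous.
apply: cvg_pair.
  apply: (@continuous_comp _ _ _ fst (set_val : set_type S -> G)); first exact: cvg_fst.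
  exact: (@initial_continuous _ _ (set_val : set_type S -> G)).
apply: (@continuous_comp _ _ _ snd (set_val : set_type S -> G)); first exact: cvg_snd.
exact: (@initial_continuous _ _ (set_val : set_type S -> G)).
Qed.
HB.instance Definition _ := PreTopologicalNmodule_isTopologicalZmodule.Build T sg_sub_cont.
Lemma sg_nbhs_val (u : T) W : nbhs (val u) W -> nbhs u [set v : T | W (val v)].
Proof. by move=> Wu; apply: (@initial_continuous _ _ (set_val : set_type S -> G)). Qed.
Lemma sg_nbhs_inv (u : T) (N : set T) : nbhs u N ->
  exists W, nbhs (val u) W /\ (forall v : T, W (val v) -> N v).
Proof.
rewrite (@nbhsE (initial_topology (set_val : set_type S -> G))) => -[B [oB Bu] BN].
case: oB => O oO OB; exists O; split.
  by apply: open_nbhs_nbhs; split => //; rewrite -OB in Bu.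
by move=> v Ov; apply: BN; rewrite -OB.
Qed.
Lemma sg_inj (u v : T) : proj1_sig u = proj1_sig v -> u = v.
Proof. by move=> h; apply: val_inj. Qed.
End sg.
Section box.
Context (I : choiceType) (K : I -> topologicalType).
Definition box (J : {fset I}) (P : forall i, set (K i)) : set (prod_topology K) :=
  [set y | forall i, i \in J -> P i (y i)].

Lemma proj_nbhs (x : prod_topology K) i (N : set (K i)) :
  nbhs (x i) N -> nbhs x [set y : prod_topology K | N (y i)].
Proof. by move=> Nx; apply: (@proj_continuous I K i x). Qed.

Lemma box_nbhs (x : prod_topology K) J P :
  (forall i, i \in J -> nbhs (x i) (P i)) -> nbhs x (box J P).
Proof.
move=> HP.
have -> : box J P = \bigcap_(i in [set i | i \in J]) [set y : prod_topology K | P i (y i)].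
  by apply/seteqP; split => y /=; [move=> Hy i /= iJ; exact: Hy| move=> Hy i iJ; exact: Hy].
apply: filter_bigI => i iJ; apply: proj_nbhs; exact: HP.
Qed.

Definition Box (x : prod_topology K) : set_system (prod_topology K) :=
  [set U | exists J P, (forall i, nbhs (x i) (P i)) /\ box J P `<=` U].

Instance Box_filter x : Filter (Box x).
Proof.
constructor.
- exists fset0, (fun i => setT); split => // i; exact: filterT.
- move=> U V [J1 [P1 [H1 S1]]] [J2 [P2 [H2 S2]]].
  exists (J1 `|` J2)%fset, (fun i => P1 i `&` P2 i); split.
    by move=> i; apply: filterI.
  move=> y Hy; split.
    by apply: S1 => i iJ; case: (Hy i _) => //; rewrite inE iJ.
  by apply: S2 => i iJ; case: (Hy i _) => //; rewrite inE iJ orbT.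
- by move=> U V UV [J [P [H S]]]; exists J, P; split => //; apply: subset_trans UV.
Qed.

Lemma nbhs_box (x : prod_topology K) U : nbhs x U -> Box x U.
Proof.
have : Box x --> (x : product_topology_def K).
  apply/cvg_sup => i A /=.
  move=> HA; have := HA; rewrite (@nbhsE (initial_topology (fun f : (forall i, K i) => f i))) => -[B [oB Bx] BA].
  case: oB => O oO <- in Bx BA.
  exists [fset i]%fset, (fun j => [set t : K j | O ((dfwith x j t) i)]); split.
    move=> j; case: (eqVneq j i) => [->|ne].
      have -> : [set t | O (dfwith x i t i)] = O by apply/seteqP; split => t /=; rewrite dfwithin.
      by apply: open_nbhs_nbhs; split.
    have -> : [set t | O (dfwith x j t i)] = setT.
      by apply/seteqP; split => t //= _; rewrite dfwithout // eq_sym.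
    exact: filterT.
  move=> y Hy; apply: BA => /=.
  by have := Hy i (fset11 i); rewrite /= dfwithin.
by move=> /(_ U).
Qed.
End box.

Section dirA.
Context (G : topologicalZmodType) (I : choiceType) (H : I -> topologicalZmodType).
Local Notation PT := (prod_topology (fun i => H i : topologicalType)).
Local Notation D := (@direct_sum_set I H).
Definition pz : PT := fun i => 0.
Definition padd (x y : PT) : PT := fun i => x i + y i.
Definition popp (x : PT) : PT := fun i => - x i.
Definition pmulz (x : PT) (n : int) : PT := fun i => x i *~ n.

Lemma D0 : D pz.
Proof.
rewrite /direct_sum_set /=.
have -> : [set i | pz i != 0] = set0 by apply/seteqP; split => i //=; rewrite eqxx.
exact: finite_set0.
Qed.
Lemma DD x y : D x -> D y -> D (padd x y).
Proof.
move=> Dx Dy; apply: (@sub_finite_set _ _ ([set i | x i != 0] `|` [set i | y i != 0])).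
  move=> i /=; rewrite /padd; case: (eqVneq (x i) 0) => [->|]; last by left.
  by rewrite add0r => ?; right.
by rewrite finite_setU; split.
Qed.
Lemma DN x : D x -> D (popp x).
Proof.
move=> Dx; apply: (sub_finite_set _ Dx) => i /=; by rewrite /popp oppr_eq0.
Qed.
Lemma DMz x n : D x -> D (pmulz x n).
Proof.
move=> Dx; apply: (sub_finite_set _ Dx) => i /=; rewrite /pmulz.
by case: (eqVneq (x i) 0) => [->|//]; rewrite mul0rz eqxx.
Qed.

Context (f : PT -> G) (hf : top_iso_direct_sum_into f).
Let fadd : forall x y, D x -> D y -> f (padd x y) = f x + f y.
Proof. by case: hf. Qed.
Let finj : {in D &, injective f}.
Proof. by case: hf. Qed.

Lemma f0 : f pz = 0.
Proof.
have := fadd D0 D0; have -> : padd pz pz = pz.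
  by apply: functional_extensionality_dep => i; rewrite /padd /pz addr0.
by move=> e; have := congr1 (fun g => g - f pz) e; rewrite subrr addrK.
Qed.
Lemma fN x : D x -> f (popp x) = - f x.
Proof.
move=> Dx; have := fadd (DN Dx) Dx; have -> : padd (popp x) x = pz.
  by apply: functional_extensionality_dep => i; rewrite /padd /popp addNr.
by rewrite f0 => /esym/eqP; rewrite addr_eq0 => /eqP.
Qed.
Lemma fMz x n : D x -> f (pmulz x n) = f x *~ n.
Proof.
move=> Dx.
have Hk : forall k : nat, f (pmulz x k) = f x *+ k.
  elim=> [|k IH].
    have -> : pmulz x 0 = pz by apply: functional_extensionality_dep => i; rewrite /pmulz mulr0z.
    by rewrite f0 mulr0n.
  have -> : pmulz x k.+1 = padd x (pmulz x k).
    by apply: functional_extensionality_dep => i; rewrite /pmulz /padd -!pmulrn mulrS.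
  by rewrite fadd // ?IH ?mulrS //; exact: DMz.
case: n => k; first by rewrite Hk -pmulrn.
have -> : pmulz x (Negz k) = popp (pmulz x k.+1).
  by apply: functional_extensionality_dep => i; rewrite /pmulz /popp NegzE mulrNz.
by rewrite fN ?Hk ?NegzE ?mulrNz ?pmulrn //; exact: DMz.
Qed.

Lemma fsubA x y : D x -> D y -> f (padd x (popp y)) = f x - f y.
Proof. by move=> Dx Dy; rewrite fadd ?fN //; exact: DN. Qed.

Context (hH : forall i, exists h : H i, h != 0).
Let h (i : I) : H i := proj1_sig (cid (hH i)).
Let hnz i : h i != 0. Proof. exact: (proj2_sig (cid (hH i))). Qed.
Let e (i : I) : PT := dfwith pz i (h i).
Let ei i : e i i = h i. Proof. by rewrite /e dfwithin. Qed.
Let ej i j : j != i -> e i j = 0. Proof. by move=> ne; rewrite /e dfwithout // eq_sym. Qed.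
Let De i : D (e i).
Proof.
apply: (@sub_finite_set _ _ [set i]); last exact: finite_set1.
by move=> j /=; case: (eqVneq j i) => [->//|/ej ->]; rewrite eqxx.
Qed.
Let a (i : I) : G := f (e i).

Let yv (r : seq I) (n : I -> int) : PT := fun j => h j *~ (if j \in r then n j else 0).

Let Dfy r n : uniq r -> D (yv r n) /\ f (yv r n) = \sum_(i <- r) a i *~ n i.
Proof.
elim: r => [|i r IH] /=.
  have -> : yv [::] n = pz by apply: functional_extensionality_dep => j; rewrite /yv mulr0z.
  by rewrite big_nil f0; split => //; exact: D0.
move=> /andP[ir ur]; have [Dr fr] := IH ur.
have -> : yv (i :: r) n = padd (pmulz (e i) (n i)) (yv r n).
  apply: functional_extensionality_dep => j; rewrite /yv /padd /pmulz inE.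
  case: (eqVneq j i) => [->|ne] /=.
    by rewrite ei (negbTE ir) mulr0z addr0.
  by rewrite ej // mul0rz add0r.
split; first by apply: DD => //; exact: DMz.
by rewrite fadd ?fr ?fMz ?big_cons //; exact: DMz.
Qed.

Lemma injA : injective a.
Proof.
move=> i j eij; apply: contra_eq (hnz i) => ne.
have := finj (mem_set (De i)) (mem_set (De j)) eij => /(congr1 (fun x => x i)).
rewrite ei (ej ne) => ->; by rewrite eqxx.
Qed.

Lemma A0 : ~ (range a) 0.
Proof.
case=> i _ ai0.
have : e i = pz by apply: finj; [exact/mem_set/De|exact/mem_set/D0|rewrite f0].
move=> /(congr1 (fun x => x i)); rewrite ei /pz => hi0.
by have := hnz i; rewrite hi0 eqxx.
Qed.

Lemma cont0 W : nbhs (0 : G) W -> exists (J : {fset I}) (P : forall i, set (H i)), (forall i, nbhs (0 : H i) (P i)) /\ forall y, D y -> box J P y -> W (f y).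
Proof.
move=> HW; case: hf => _ _ fc _.
have := (wcontP _ _).1 fc pz D0 W; rewrite f0 => /(_ HW) /nbhs_box [J [P [HP sub]]].
by exists J, P; split => // y Dy /sub; apply.
Qed.

Lemma open0 J P : (forall i, nbhs (0 : H i) (P i)) -> exists V, nbhs (0 : G) V /\ forall y, D y -> V (f y) -> box J P y.
Proof.
move=> HP; case: hf => _ _ _ fo.
have := fo pz D0 (box J P) (box_nbhs (fun i _ => HP i)).
by rewrite f0 => -[V [nV HV]]; exists V.
Qed.

Lemma tiA : top_independent (range a).
Proof.
split; first exact: A0.
move=> W HW; have [J [P [HP Hc]]] := cont0 HW.
have [V [nV HV]] := open0 J HP.
exists V; split => // F z uF FA VF g gF.
have [r Fr] : exists r : seq I, F = map a r.
  elim: F FA {uF VF gF} => [|g' F IH] FA; first by exists [::].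
  have [|r ->] := IH; first by move=> x xF; apply: FA; rewrite inE xF orbT.
  have [i _ <-] := FA g' (mem_head _ _); by exists (i :: r).
subst F; have ur : uniq r := map_uniq uF.
move: VF; rewrite big_map => VF.
have [Dy fy] := @Dfy r (fun i => z (a i)) ur.
have := HV _ Dy; rewrite fy => /(_ VF) By.
case/mapP: gF => i ir ->.
have -> : a i *~ z (a i) = f (pmulz (e i) (z (a i))) by rewrite fMz.
apply: Hc; first exact: DMz.
move=> j; rewrite /pmulz; case: (eqVneq j i) => [->|ne] jJ.
  by rewrite ei; have := By i jJ; rewrite /yv ir.
by rewrite ej // mul0rz; exact: nbhs_singleton (HP j).
Qed.

Lemma acsA : abs_cauchy_summable (range a).
Proof.
move=> W HW; have [J [P [HP Hc]]] := cont0 HW.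
exists (a @` [set` J]); split.
- exact/finite_image/finite_fset.
- by move=> g [i _ <-]; exists i.
set K := [set g | exists y, [/\ D y, (forall j, j \in J -> y j = 0) & g = f y]].
have hK : is_subgroup K.
  split; first by exists pz; split; [exact: D0| by [] | by rewrite f0].
  move=> _ _ [y1 [D1 Z1 ->]] [y2 [D2 Z2 ->]]; exists (padd y1 (popp y2)); split.
  + by apply: DD => //; exact: DN.
  + by move=> j jJ; rewrite /padd /popp Z1 // Z2 // subr0.
  + by rewrite fsubA.
have sK : gen_subgroup (range a `\` a @` [set` J]) `<=` K.
  apply: gen_min hK _ => _ [[i _ <-] niJ]; exists (e i); split => //.
  move=> j jJ; apply: ej; apply/eqP => ji; apply: niJ; exists j => //.
  by rewrite ji.
move=> g /sK [y [Dy Zy ->]]; apply: Hc Dy _ => j jJ.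
by rewrite Zy //; exact: nbhs_singleton (HP j).
Qed.

Lemma dirA_main : exists A : set G,
  [/\ top_independent A, abs_cauchy_summable A & (A #= [set: I])%card].
Proof.
exists (range a); split; [exact: tiA | exact: acsA | exact: (inj_card_eq (in2W injA))].
Qed.
End dirA.

Section dirB.
Context (G : topologicalZmodType) (I : choiceType) (hG : hausdorff_space G)
  (A : set G) (tiA : top_independent A) (acsA : abs_cauchy_summable A)
  (a : I -> G) (ainj : injective a) (aA : forall i, A (a i)).

Definition Sa (i : I) := gen_subgroup [set a i].
Definition hSa (i : I) : is_subgroup (Sa i) := gen_is_sub _.
Definition Hf (i : I) : topologicalZmodType := sgT (hSa i).
Local Notation PT := (prod_topology (fun i => Hf i : topologicalType)).
Local Notation D := (@direct_sum_set I Hf).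

Definition fB (x : PT) : G := \sum_(i \in [set i | x i != 0]) proj1_sig (x i).

Lemma fr (x : PT) (r : seq I) : uniq r -> (forall i, x i != 0 -> i \in r) ->
  fB x = \sum_(i <- r) proj1_sig (x i).
Proof.
move=> ur Hr; rewrite /fB (fsbig_fwiden r) //.
move=> i [_ /= /negP]; rewrite negbK => /eqP xi0 /=; by rewrite xi0.
Qed.

Lemma rep (x : PT) : exists n : I -> int, forall i, proj1_sig (x i) = a i *~ n i.
Proof.
have H1 : forall i, exists n : int, proj1_sig (x i) = a i *~ n.
  by move=> i; apply: gen1; exact: (set_valP (x i)).
by have [n Hn] := choice H1; exists n.
Qed.

Lemma tiI W : nbhs (0 : G) W -> exists U, nbhs (0 : G) U /\
  forall r (n : I -> int), uniq r -> U (\sum_(i <- r) a i *~ n i) ->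
    forall i, i \in r -> W (a i *~ n i).
Proof.
move=> HW; have [_ HT] := tiA; have [U [nU HU]] := HT W HW.
exists U; split => // r n ur Us i ir.
pose z g := n (nth i r (index g (map a r))).
have zE j : j \in r -> z (a j) = n j.
  by move=> jr; rewrite /z (index_map ainj) nth_index.
have umr : uniq (map a r) by rewrite map_inj_uniq.
have := HU (map a r) z umr _ _ (a i) (map_f a ir).
rewrite zE //; apply.
  by move=> g /mapP [j _ ->]; exact: aA.
rewrite big_map; rewrite (eq_big_seq (fun j => a j *~ n j)) //.
by move=> j jr; rewrite zE.
Qed.

Lemma zs r (n : I -> int) : uniq r -> \sum_(i <- r) a i *~ n i = 0 ->
  forall i, i \in r -> a i *~ n i = 0.
Proof.
move=> ur s0 i ir; apply: (@haus0 G (a i *~ n i) hG) => W HW.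
have [U [nU HU]] := tiI HW; apply: (HU r n ur _ i ir).
by rewrite s0; exact: nbhs_singleton.
Qed.

Lemma fdiff (x y : PT) (J : {fset I}) : D x -> D y -> exists r : seq I,
  [/\ uniq r, (forall i, i \in J -> i \in r),
      (forall i, i \notin r -> x i = 0 /\ y i = 0) &
      fB y - fB x = \sum_(i <- r) proj1_sig (y i - x i)].
Proof.
move=> Dx Dy.
pose X := [set i | x i != 0] `|` [set i | y i != 0] `|` [set` J].
have fin : finite_set X.
  by rewrite /X !finite_setU; split; [split|exact: finite_fset].
exists (fset_set X); split.
- exact: fset_uniq.
- by move=> i iJ; rewrite in_fset_set //; apply/mem_set; right.
- move=> i; rewrite in_fset_set // notin_setE /X /= => /not_orP [/not_orP [h1 h2] _].
  by split; [move/negP: h1|move/negP: h2]; rewrite negbK => /eqP.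
have cx : forall i, x i != 0 -> i \in fset_set X.
  by move=> i xi; rewrite in_fset_set //; apply/mem_set; left; left.
have cy : forall i, y i != 0 -> i \in fset_set X.
  by move=> i yi; rewrite in_fset_set //; apply/mem_set; left; right.
by rewrite (fr (fset_uniq _) cx) (fr (fset_uniq _) cy) -sumrB.
Qed.

Lemma faddB (x y : PT) : D x -> D y -> fB (fun i => x i + y i) = fB x + fB y.
Proof.
move=> Dx Dy; pose X := [set i | x i != 0] `|` [set i | y i != 0].
have fin : finite_set X by rewrite /X finite_setU.
have cx : forall i, x i != 0 -> i \in fset_set X.
  by move=> i xi; rewrite in_fset_set //; apply/mem_set; left.
have cy : forall i, y i != 0 -> i \in fset_set X.
  by move=> i yi; rewrite in_fset_set //; apply/mem_set; right.
have cxy : forall i, (fun i => x i + y i) i != 0 -> i \in fset_set X.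
  move=> i /=; case: (eqVneq (x i) 0) => [xi0|xi _]; last exact: cx.
  by rewrite xi0 add0r; exact: cy.
by rewrite (fr (fset_uniq _) cx) (fr (fset_uniq _) cy) (fr (fset_uniq _) cxy) -big_split.
Qed.

Lemma finjB : {in D &, injective fB}.
Proof.
move=> x y /set_mem Dx /set_mem Dy fxy.
have [r [ur _ out e]] := fdiff fset0 Dx Dy.
have [n Hn] := rep (fun i => y i - x i : Hf i).
move: e; rewrite fxy subrr (eq_bigr (fun i => a i *~ n i)); last by move=> j _; exact: Hn.
move=> /esym s0; have z := zs ur s0.
apply: functional_extensionality_dep => i.
case: (boolP (i \in r)) => ir; last by have [-> ->] := out i ir.
apply/esym/subr0_eq; apply: sg_inj; rewrite [LHS]Hn z //.
Qed.

Lemma fcontB : {within D, continuous fB}.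
Proof.
apply/wcontP => x Dx W HW.
have nW0 := nbhs_shift0 HW.
have [V1 [V2 [n1 n2 HV]]] := add_nbhs0 nW0.
have [F [finF FA gF]] := acsA (filterI n1 n2).
pose X := [set i | F (a i)].
have finX : finite_set X.
  rewrite -(eq_finite_set (inj_card_eq (in2W ainj) : (a @` X #= X)%card)).
  by apply: sub_finite_set finF => _ [i Xi <-].
pose J := fset_set X.
have [W1 [nW1 HW1]] := ksum (size J) n1.
pose P := fun i => [set t : Hf i | W1 (proj1_sig t - proj1_sig (x i))].
have nP : forall i, i \in J -> nbhs (x i) (P i).
  move=> i _; have := @sg_nbhs_val G (Sa i) (hSa i) (x i) [set g | W1 (g - proj1_sig (x i))] (nbhs_unshift0 _ nW1).
  by apply: filterS.
apply: filterS (box_nbhs nP) => y By Dy.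
suff : W (fB x + (fB y - fB x)) by rewrite addrC subrK.
have [r [ur Jr out ->]] := fdiff J Dx Dy.
rewrite (bigID (fun i => i \in J)) /=; apply: HV.
  have := HW1 [seq proj1_sig (y i - x i) | i <- [seq i <- r | i \in J]].
  rewrite big_map big_filter; apply.
    rewrite size_map; apply: uniq_leq_size; first exact: filter_uniq.
    by move=> i; rewrite mem_filter => /andP[].
  by move=> g /mapP [i]; rewrite mem_filter => /andP [iJ _] ->; exact: By i iJ.
have : gen_subgroup (A `\` F) (\sum_(i <- r | i \notin J) proj1_sig (y i - x i)).
  rewrite -big_filter; apply: subg_sum (gen_is_sub _) _ => i; rewrite mem_filter => /andP [iJ _].
  apply: (gen_mono _ (set_valP (y i - x i))) => _ ->; split; first exact: aA.
  move=> Fai; move/negP: iJ; apply; rewrite in_fset_set //; exact: mem_set.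
by case/gF.
Qed.

Lemma fopenB (x : PT) : D x -> forall U, nbhs x U ->
  exists V : set G, nbhs (fB x) V /\ (forall y, D y -> V (fB y) -> U y).
Proof.
move=> Dx U /nbhs_box [J [P [HP sub]]].
have H1 : forall i, exists Wi : set G, nbhs (proj1_sig (x i)) Wi /\
    forall v : Hf i, Wi (proj1_sig v) -> P i v.
  by move=> i; exact: sg_nbhs_inv (HP i).
have [Wf HWf] := choice H1.
pose W := \bigcap_(i in [set i | i \in J]) [set g | Wf i (proj1_sig (x i) + g)].
have nW : nbhs (0 : G) W.
  apply: filter_bigI => i _; apply: nbhs_shift0; exact: (HWf i).1.
have [U0 [nU0 HU0]] := tiI nW.
exists [set g | U0 (g - fB x)]; split; first exact: nbhs_unshift0.
move=> y Dy /= Uy; apply: sub => i iJ.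
have [r [ur Jr out e]] := fdiff J Dx Dy.
have [n Hn] := rep (fun i => y i - x i : Hf i).
move: Uy; rewrite e (eq_bigr (fun i => a i *~ n i)); last by move=> j _; exact: Hn.
move=> Uy; have := HU0 r n ur Uy i (Jr i iJ); rewrite -Hn => Wi.
apply: (HWf i).2; have := Wi i iJ => /=.
by rewrite addrC subrK.
Qed.

Lemma dirB_main : exists H : I -> topologicalZmodType,
  (forall i, exists h : H i, h != 0) /\ contains_direct_sum H G.
Proof.
exists Hf; split.
  move=> i; have Si : Sa i (a i) by apply: gen_incl.
  exists (exist _ (a i) (mem_set Si) : Hf i); apply/eqP => /(congr1 (@proj1_sig _ _)) /= ai0.
  by case: tiA => + _; apply; rewrite -ai0; exact: aA.
exists fB; split.
- by move=> x y Dx Dy; exact: faddB.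
- exact: finjB.
- exact: fcontB.
- exact: fopenB.
Qed.
End dirB.

Lemma mainC (G : topologicalZmodType) (I : choiceType) :
  hausdorff_space G ->
  ((exists H : I -> topologicalZmodType,
      (forall i, exists h : H i, h != 0) /\ contains_direct_sum H G)
   <->
   (exists A : set G,
      [/\ top_independent A, abs_cauchy_summable A & (A #= [set: I])%card])).
Proof.
move=> hG; split.
  by move=> [H [hH [f hf]]]; exact: dirA_main hf hH.
move=> [A [tA cA cardA]].
have /card_bijP [g bg] := card_esym cardA.
pose a (i : I) : G := proj1_sig (g (exist _ i (in_setT i))).
have ainj : injective a.
  move=> i j /= eij; have := bij_inj bg (val_inj eij).
  by move=> /(congr1 (@proj1_sig _ _)).
have aA : forall i, A (a i) by move=> i; exact: set_valP.
exact: (dirB_main hG tA cA ainj aA).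
Qed.

Unset Implicit Arguments.
Theorem corollary5p2 (G : topologicalZmodType) (I : Type) :
  hausdorff_space G ->
  ((exists H : I -> topologicalZmodType,
      (forall i, exists h : H i, h != 0) /\ contains_direct_sum H G)
   <->
   (exists A : set G,
      [/\ top_independent A, abs_cauchy_summable A & (A #= [set: I])%card])).
Proof. exact: (@mainC G {classic I}). Qed.
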